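(* Let $M,N\ge1$, $\gamma>0$ and let $\lambda_x,\lambda_v,\lambda_w$ be arbitrary positive constants. For arbitrary initial data, let $\{(\hat x_i(t),\hat v_i(t))\}_{i=1}^N$ be the solution of the centralized herding system \[ \frac{d\hat x_i}{dt}=\hat v_i,\qquad \frac{d\hat v_i}{dt}=\frac{\lambda_x}{N}\sum_{j=1}^N\hat\phi_{ij}(\hat x_j-\hat x_i)+\frac{\lambda_v}{N}\sum_{j=1}^N\hat\phi_{ij}(\hat v_j-\hat v_i)-\lambda_w\hat x_i,\qquad \hat\phi_{ij}=(1+|\hat x_i-\hat x_j|^2)^{-\gamma/2}, \] with $\sum_i\hat x_i(0)=\sum_i\hat v_i(0)=0$. Then $\mathcal{E}_2(t)\to0$ as $t\to\infty$.
   Context: $|\cdot|$ is the Euclidean norm on $\mathbb{R}^M$. The centralized variables are $\hat x_i=x_i-x_c$, $\hat v_i=v_i-v_c$, the deviations from the averages $x_c=\frac1N\sum_ix_i$, $v_c=\frac1N\sum_iv_i$ of a solution $(x_i,v_i)$ of the original herding model (with arbitrary initial data $x_i(0),v_i(0)$); their sums vanish for all time. Let $X=\sum_i|\hat x_i|^2$, $V=\sum_i|\hat v_i|^2$, and \[ S_\gamma=\begin{cases}\frac1N\sum_{i,j}\big\{(1+|\hat x_i-\hat x_j|^2)^{-(\gamma-2)/2}-1\big\}, & 0<\gamma<2,\\ \frac1N\sum_{i,j}\log(1+|\hat x_i-\hat x_j|^2), & \gamma=2,\\ \frac1N\sum_{i,j}\big\{1-(1+|\hat x_i-\hat x_j|^2)^{-(\gamma-2)/2}\big\},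 & \gamma>2,\end{cases} \qquad \beta_\gamma=\begin{cases}2-\gamma,&0<\gamma<2,\\2,&\gamma=2,\\\gamma-2,&\gamma>2.\end{cases} \] The herding energy is $\mathcal{E}_2(t)=\lambda_wX(t)+V(t)+\lambda_x\beta_\gamma^{-1}S_\gamma(t)$. *)

(* Defs.v *)
From mathcomp Require Import all_boot all_order all_algebra.
From mathcomp Require Import all_classical all_reals all_analysis.
Set Implicit Arguments. Unset Strict Implicit. Unset Printing Implicit Defensive.
Import Order.TTheory GRing.Theory Num.Theory.
Local Open Scope ring_scope.

(* A configuration of N agents in R^M: component k of agent i at time t is
   x i k t. *)

Definition sqdist (R : realType) (N M : nat) (x : 'I_N -> 'I_M -> R -> R)
  (i j : 'I_N) (t : R) : R :=
  \sum_(k < M) (x i k t - x j k t) ^+ 2.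

Definition phi (R : realType) (N M : nat) (gamma : R)
  (x : 'I_N -> 'I_M -> R -> R) (i j : 'I_N) (t : R) : R :=
  powR (1 + sqdist x i j t) (- (gamma / 2)).

(* X(t) = sum_i |x_i(t)|^2  (also used for V with the velocities) *)
Definition sqsum (R : realType) (N M : nat) (x : 'I_N -> 'I_M -> R -> R)
  (t : R) : R :=
  \sum_(i < N) \sum_(k < M) (x i k t) ^+ 2.

Definition S_gamma (R : realType) (N M : nat) (gamma : R)
  (x : 'I_N -> 'I_M -> R -> R) (t : R) : R :=
  if gamma < 2 then
    N%:R^-1 * \sum_(i < N) \sum_(j < N)
       (powR (1 + sqdist x i j t) (- ((gamma - 2) / 2)) - 1)
  else if gamma == 2 then
    N%:R^-1 * \sum_(i < N) \sum_(j < N) ln (1 + sqdist x i j t)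
  else
    N%:R^-1 * \sum_(i < N) \sum_(j < N)
       (1 - powR (1 + sqdist x i j t) (- ((gamma - 2) / 2))).

Definition beta_gamma (R : realType) (gamma : R) : R :=
  if gamma < 2 then 2 - gamma else if gamma == 2 then 2 else gamma - 2.

Definition E2 (R : realType) (N M : nat) (gamma lx lw : R)
  (x v : 'I_N -> 'I_M -> R -> R) (t : R) : R :=
  lw * sqsum x t + sqsum v t + lx / beta_gamma gamma * S_gamma gamma x t.

(* Main.v *)
Require Import Defs.
From mathcomp Require Import all_boot all_order all_algebra.
From mathcomp Require Import all_classical all_reals all_analysis.
From mathcomp Require Import ring lra.
Import Order.TTheory GRing.Theory Num.Theory numFieldNormedType.Exports.
Local Open Scope classical_set_scope.
Local Open Scope ring_scope.

Set Implicit Arguments.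
Section Gen.
Context {R : realType}.

Lemma dD (f g : R -> R) (a b t : R) : is_derive t 1 f a -> is_derive t 1 g b ->
  is_derive t 1 (fun s => f s + g s) (a + b).
Proof. move=> ha hb. exact: is_deriveD. Qed.
Lemma dB (f g : R -> R) (a b t : R) : is_derive t 1 f a -> is_derive t 1 g b ->
  is_derive t 1 (fun s => f s - g s) (a - b).
Proof. move=> ha hb. exact: is_deriveB. Qed.
Lemma dN (f : R -> R) (a t : R) : is_derive t 1 f a ->
  is_derive t 1 (fun s => - f s) (- a).
Proof. move=> ha. exact: is_deriveN. Qed.
Lemma dM (f g : R -> R) (a b t : R) : is_derive t 1 f a -> is_derive t 1 g b ->
  is_derive t 1 (fun s => f s * g s) (f t * b + g t * a).
Proof. move=> ha hb. have := is_deriveM ha hb. by []. Qed.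
Lemma dC (c t : R) : is_derive t 1 (fun _ : R => c) 0.
Proof. exact: is_derive_cst. Qed.
Lemma dZ (f : R -> R) (c a t : R) : is_derive t 1 f a ->
  is_derive t 1 (fun s => c * f s) (c * a).
Proof. move=> ha. have := dM (dC c t) ha. by rewrite mulr0 addr0. Qed.
Lemma dX2 (f : R -> R) (a t : R) : is_derive t 1 f a ->
  is_derive t 1 (fun s => f s ^+ 2) (2 * f t * a).
Proof.
move=> ha. have := dM ha ha.
rewrite (_ : (fun s => f s * f s) = (fun s => f s ^+ 2)); last first.
  by apply/funext => s; rewrite expr2.
suff -> : 2 * f t * a = f t * a + f t * a by [].
ring.
Qed.
Lemma dcomp (f g : R -> R) (a b t : R) : is_derive (g t) 1 f a -> is_derive t 1 g b ->
  is_derive t 1 (fun s => f (g s)) (a * b).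
Proof. move=> ha hb. exact: is_derive1_comp. Qed.
Lemma dsum n (f : 'I_n -> R -> R) (a : 'I_n -> R) (t : R) :
  (forall i, is_derive t 1 (f i) (a i)) ->
  is_derive t 1 (fun s => \sum_(i < n) f i s) (\sum_(i < n) a i).
Proof.
move=> h. have := is_derive_sum h.
rewrite (_ : (\sum_(i < n) f i) = (fun s => \sum_(i < n) f i s)) //.
apply/funext => s. by rewrite fct_sumE.
Qed.

Lemma cont_sum (T : topologicalType) n (f : 'I_n -> T -> R) (s : T) :
  (forall i, {for s, continuous (f i)}) ->
  {for s, continuous (fun y => \sum_(i < n) f i y)}.
Proof.
elim: n f => [|n IH] f hf.
  rewrite (_ : (fun y => _) = (fun=> 0)); last by apply/funext => y; rewrite big_ord0.
  exact: cst_continuous.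
rewrite (_ : (fun y => _) = (fun y => \sum_(i < n) f (widen_ord (leqnSn n) i) y + f ord_max y)); last first.
  by apply/funext => y; rewrite big_ord_recr.
apply: continuousD; last exact: hf.
by apply: IH => i; exact: hf.
Qed.

Lemma nonincr (f df : R -> R) (a b : R) : a <= b ->
  (forall t, a < t -> t < b -> is_derive t 1 f (df t)) ->
  (forall t, a < t -> t < b -> df t <= 0) ->
  {within `[a, b], continuous f} -> f b <= f a.
Proof.
move=> ab hd hdf hc.
case: (ltrP a b) => ab'; last first.
  have -> : b = a by apply/eqP; rewrite eq_le ab ab'.
  by [].
have [c' c'in h'] : exists2 c, c \in `]a, b[ & f b - f a = df c * (b - a).
  apply: MVT => // t; rewrite in_itv /= => /andP[t1 t2]; exact: hd.
move: c'in; rewrite in_itv /= => /andP[c1 c2].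
have : df c' * (b - a) <= 0 by rewrite mulr_le0_ge0 ?hdf // subr_ge0 ltW.
rewrite -h'; lra.
Qed.

End Gen.
Section Alg.
Context {R : realType} (N M : nat).
Implicit Types (w : 'I_N -> 'I_N -> R) (a b : 'I_N -> 'I_M -> R).

Lemma symsum w a b : (forall i j, w i j = w j i) ->
  \sum_(i < N) \sum_(j < N) w i j * \sum_(k < M) (a j k - a i k) * b i k =
  - 2^-1 * \sum_(i < N) \sum_(j < N) w i j * \sum_(k < M) (a i k - a j k) * (b i k - b j k).
Proof.
move=> ws.
set S := \sum_(i < N) _.
have e1 : S = \sum_(i < N) \sum_(j < N) w i j * \sum_(k < M) (a i k - a j k) * b j k.
  rewrite /S exchange_big; apply: eq_bigr => i _; apply: eq_bigr => j _.
  by rewrite ws.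
have e2 : \sum_(i < N) \sum_(j < N) w i j * \sum_(k < M) (a i k - a j k) * (b i k - b j k)
   = - (S + S).
  rewrite {2}e1 /S -big_split -sumrN; apply: eq_bigr => i _.
  rewrite -big_split -sumrN; apply: eq_bigr => j _.
  rewrite /= -mulrDr -mulrN -big_split -sumrN; congr (_ * _); apply: eq_bigr => k _.
  rewrite /=; ring.
by rewrite e2; field.
Qed.

Lemma symsum0 w (c : 'I_N -> R) : (forall i j, w i j = w j i) ->
  \sum_(i < N) \sum_(j < N) w i j * (c j - c i) = 0.
Proof.
move=> ws.
set S := \sum_(i < N) _.
have e1 : S = - S.
  rewrite {1}/S exchange_big -sumrN; apply: eq_bigr => i _.
  rewrite -sumrN; apply: eq_bigr => j _; rewrite ws; ring.
lra.
Qed.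

Lemma sqdiff_sum a : (forall k, \sum_(i < N) a i k = 0) ->
  \sum_(i < N) \sum_(j < N) \sum_(k < M) (a i k - a j k) ^+ 2 =
  2 * N%:R * \sum_(i < N) \sum_(k < M) a i k ^+ 2.
Proof.
move=> a0.
have e : forall i j, \sum_(k < M) (a i k - a j k) ^+ 2 =
   \sum_(k < M) a i k ^+ 2 + \sum_(k < M) a j k ^+ 2 - 2 * \sum_(k < M) a i k * a j k.
  move=> i j; rewrite mulr_sumr -big_split -sumrB /=; apply: eq_bigr => k _; ring.
under eq_bigr => i _ do under eq_bigr => j _ do rewrite e.
set SA := \sum_(j < N) \sum_(k < M) a j k ^+ 2.
transitivity (\sum_(i < N) (N%:R * \sum_(k < M) a i k ^+ 2 + SA - 2 * 0)).
  apply: eq_bigr => i _.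
  rewrite sumrB big_split /= sumr_const card_ord -mulr_sumr mulr_natl.
  have -> : \sum_(i0 < N) \sum_(k < M) a i k * a i0 k = 0.
    rewrite exchange_big /=; apply: big1 => k _.
    by rewrite -mulr_sumr a0 mulr0.
  by rewrite mulr0 mul0rn mulr_natl.
rewrite (eq_bigr (fun i => N%:R * \sum_(k < M) a i k ^+ 2 + SA)); last first.
  by move=> i _; rewrite mulr0 subr0.
rewrite big_split /= sumr_const card_ord -mulr_sumr -/SA.
rewrite -mulr_natl; ring.
Qed.

Lemma term_le_sum (f : 'I_N -> R) i : (forall j, 0 <= f j) -> f i <= \sum_(j < N) f j.
Proof.
move=> h; rewrite (bigD1 i) //= lerDl sumr_ge0 // => j _; exact: h.
Qed.

End Alg.
Arguments dC {R} c t.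
Arguments dZ {R f} c {a t}.
Section K.
Context {R : realType} (gamma : R) (hg : 0 < gamma).

Lemma dpow (p r : R) : 0 < 1 + r ->
  is_derive r 1 (fun s => powR (1 + s) p) (p * powR (1 + r) (p - 1)).
Proof.
move=> h.
have := dcomp (is_derive1_powR p h) (dD (dC 1 r) (is_derive_id r 1)).
by rewrite add0r mulr1.
Qed.

Arguments dpow p {r}.
Lemma dln (r : R) : 0 < 1 + r ->
  is_derive r 1 (fun s => ln (1 + s)) ((1 + r)^-1).
Proof.
move=> h.
have := dcomp (is_derive1_ln h) (dD (dC 1 r) (is_derive_id r 1)).
by rewrite add0r mulr1.
Qed.

Lemma beta_gt0 : 0 < beta_gamma gamma.
Proof.
rewrite /beta_gamma; case: (ltP gamma 2) => g2; first lra.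
case: (eqVneq gamma 2) => [e2|e2] /=; first lra.
have gt2 : 2 < gamma by rewrite lt_neqAle eq_sym e2 g2.
lra.
Qed.

Definition Kf (r : R) : R := (beta_gamma gamma)^-1 *
  (if gamma < 2 then powR (1 + r) (- ((gamma - 2) / 2)) - 1
   else if gamma == 2 then ln (1 + r)
   else 1 - powR (1 + r) (- ((gamma - 2) / 2))).

Lemma dK (r : R) : 0 <= r -> is_derive r 1 Kf (2^-1 * powR (1 + r) (- (gamma / 2))).
Proof.
move=> r0; have h1 : 0 < 1 + r by lra.
have hb := beta_gt0.
rewrite /Kf; move: hb; rewrite /beta_gamma.
have [g2|g2] := ltP gamma 2.
  move=> hb.
  have := dZ ((2 - gamma)^-1) (dB (dpow (- ((gamma - 2) / 2)) h1) (dC 1 r)).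
  have -> : - ((gamma - 2) / 2) - 1 = - (gamma / 2) by field.
  suff -> : (2 - gamma)^-1 * (- ((gamma - 2) / 2) * (1 + r) `^ (- (gamma / 2)) - 0) =
    2^-1 * (1 + r) `^ (- (gamma / 2)) by [].
  field; lra.
have [e2|e2] := eqVneq gamma 2.
  move=> hb.
  have := dZ (2^-1) (@dln r h1).
  suff -> : (1 + r)^-1 = (1 + r) `^ (- (gamma / 2)) by [].
  by rewrite e2 divff ?powR_inv1 // ?ltW // pnatr_eq0.
move=> hb.
have := dZ ((gamma - 2)^-1) (dB (dC 1 r) (dpow (- ((gamma - 2) / 2)) h1)).
have -> : - ((gamma - 2) / 2) - 1 = - (gamma / 2) by field.
have gt2 : 2 < gamma by rewrite lt_neqAle eq_sym e2 g2.
suff -> : (gamma - 2)^-1 * (0 - - ((gamma - 2) / 2) * (1 + r) `^ (- (gamma / 2))) =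
    2^-1 * (1 + r) `^ (- (gamma / 2)) by [].
field; lra.
Qed.

End K.
Section K2.
Context {R : realType} (gamma : R) (hg : 0 < gamma).

Lemma g2ge0 : 0 <= gamma / 2.
Proof. by rewrite divr_ge0 // ltW. Qed.

Lemma pw_le1 (r : R) : 0 <= r -> (1 + r) `^ (- (gamma / 2)) <= 1.
Proof.
move=> r0; have h1 : 0 < 1 + r by lra.
have hp := powR_gt0 (gamma / 2) h1.
rewrite powRN invr_le1 //; last by rewrite unitfE gt_eqF.
have e1 : (1:R) `^ (gamma / 2) = 1 by rewrite powR1.
rewrite -{1}e1.
by apply: ge0_ler_powR; rewrite ?nnegrE ?g2ge0 //; lra.
Qed.

Lemma pw_ge (r B : R) : 0 <= r -> r <= B ->
  (1 + B) `^ (- (gamma / 2)) <= (1 + r) `^ (- (gamma / 2)).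
Proof.
move=> r0 rB; have h1 : 0 < 1 + r by lra.
have h2 : 0 < 1 + B by lra.
rewrite !powRN lef_pV2 ?posrE ?powR_gt0 //.
by apply: ge0_ler_powR; rewrite ?nnegrE ?g2ge0 //; lra.
Qed.

Lemma Kf0 : Kf gamma 0 = 0.
Proof.
rewrite /Kf addr0 powR1 ln1.
by case: ifP => _; [rewrite subrr mulr0|case: ifP => _; rewrite ?subrr mulr0].
Qed.

Lemma Kf_bounds (r : R) : 0 <= r -> 0 <= Kf gamma r <= r / 2.
Proof.
move=> r0.
have cont (f : R -> R) (df : R -> R) : (forall s : R, 0 <= s -> is_derive s 1 f (df s)) ->
    {within `[0, r], continuous f}.
  move=> hd; apply: derivable_within_continuous => s.
  rewrite in_itv /= => /andP[s0 _].
  by case: (hd s s0).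
apply/andP; split.
  have := @nonincr _ (fun s => - Kf gamma s) (fun s => - (2^-1 * (1 + s) `^ (- (gamma / 2)))) 0 r r0.
  rewrite Kf0 oppr0 => h; rewrite -oppr_le0; apply: h.
  - move=> t t0 _; exact: dN (dK _ _ (ltW t0)).
  - move=> t t0 _; rewrite oppr_le0 mulr_ge0 ?powR_ge0 //.
  - apply: (cont _ (fun s => - (2^-1 * (1 + s) `^ (- (gamma / 2))))) => s s0.
    exact: dN (dK _ _ s0).
have := @nonincr _ (fun s => Kf gamma s - s / 2) (fun s => 2^-1 * (1 + s) `^ (- (gamma / 2)) - 2^-1) 0 r r0.
rewrite Kf0 mul0r subr0 => h; rewrite -subr_le0; apply: h.
- move=> t t0 _; apply: dB; first exact: dK _ _ (ltW t0).
  have := dZ (2^-1) (is_derive_id t 1).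
  rewrite mulr1 (_ : (fun s => 2^-1 * s) = (fun s => s / 2)) //.
  by apply/funext => s; rewrite mulrC.
- move=> t t0 _; have := pw_le1 t (ltW t0); lra.
- apply: (cont _ (fun s => 2^-1 * (1 + s) `^ (- (gamma / 2)) - 2^-1)) => s s0.
  apply: dB; first exact: dK _ _ s0.
  have := dZ (2^-1) (is_derive_id s 1).
  rewrite mulr1 (_ : (fun s => 2^-1 * s) = (fun s => s / 2)) //.
  by apply/funext => s'; rewrite mulrC.
Qed.

End K2.
Lemma sumlin {R : realType} n (f g : 'I_n -> R) (c : R) :
  (forall k, f k = c * g k) -> \sum_(k < n) f k = c * \sum_(k < n) g k.
Proof. by move=> h; rewrite mulr_sumr; apply: eq_bigr => k _. Qed.

Lemma sw {R : realType} N M (c : R) (w : 'I_N -> R) (d : 'I_N -> 'I_M -> R) (b : 'I_M -> R) :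
  \sum_(k < M) b k * (c * \sum_(j < N) w j * d j k) =
  c * \sum_(j < N) w j * \sum_(k < M) d j k * b k.
Proof.
have L : \sum_(k < M) b k * (c * \sum_(j < N) w j * d j k) =
   \sum_(k < M) \sum_(j < N) c * (w j * (d j k * b k)).
  by apply: eq_bigr => k _; rewrite !mulr_sumr; apply: eq_bigr => j _; ring.
have Rr : c * \sum_(j < N) w j * \sum_(k < M) d j k * b k =
   \sum_(j < N) \sum_(k < M) c * (w j * (d j k * b k)).
  rewrite mulr_sumr; apply: eq_bigr => j _; rewrite !mulr_sumr; apply: eq_bigr => k _; ring.
by rewrite L Rr exchange_big.
Qed.

Lemma dsum_const {R : realType} n m (c : R) (f : 'I_n -> 'I_m -> R) :
  \sum_(i < n) \sum_(j < m) c * f i j = c * \sum_(i < n) \sum_(j < m) f i j.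
Proof. by rewrite mulr_sumr; apply: eq_bigr => i _; rewrite mulr_sumr. Qed.

Section Main.
Context {R : realType} (M N : nat) (hN : (0 < N)%N) (gamma lx lv lw : R)
  (hg : 0 < gamma) (hlx : 0 < lx) (hlv : 0 < lv) (hlw : 0 < lw)
  (x v : 'I_N -> 'I_M -> R -> R).

Definition F i k t := lx / N%:R * \sum_(j < N) phi gamma x i j t * (x j k t - x i k t)
        + lv / N%:R * \sum_(j < N) phi gamma x i j t * (v j k t - v i k t)
        - lw * x i k t.

Context (hx : forall t : R, 0 < t -> forall i k, is_derive t 1 (x i k) (v i k t))
  (hv : forall t : R, 0 < t -> forall i k, is_derive t 1 (v i k) (F i k t)).

Lemma sqdist_ge0 i j t : 0 <= sqdist x i j t.
Proof. by apply: sumr_ge0 => k _; rewrite sqr_ge0. Qed.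

Lemma sqdist_sym i j t : sqdist x i j t = sqdist x j i t.
Proof. by apply: eq_bigr => k _; rewrite -sqrrN opprB. Qed.

Lemma ph_sym t i j : phi gamma x i j t = phi gamma x j i t.
Proof. by rewrite /phi sqdist_sym. Qed.

Lemma ph_ge0 i j t : 0 <= phi gamma x i j t.
Proof. exact: powR_ge0. Qed.

Lemma ph_le1 i j t : phi gamma x i j t <= 1.
Proof. rewrite /phi; apply: pw_le1 => //; exact: sqdist_ge0. Qed.

Definition AA t (a b : 'I_N -> 'I_M -> R) :=
  \sum_(i < N) \sum_(j < N) phi gamma x i j t * \sum_(k < M) (a j k - a i k) * b i k.
Definition TT t (a b : 'I_N -> 'I_M -> R) :=
  \sum_(i < N) \sum_(j < N) phi gamma x i j t * \sum_(k < M) (a i k - a j k) * (b i k - b j k).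
Definition xs t := fun i k => x i k t.
Definition vs t := fun i k => v i k t.
Definition PP t := \sum_(i < N) \sum_(k < M) x i k t * v i k t.

Lemma AA_TT t a b : AA t a b = - 2^-1 * TT t a b.
Proof. by apply: symsum => i j; exact: ph_sym. Qed.

Lemma sumF t (b : 'I_N -> 'I_M -> R) :
  \sum_(i < N) \sum_(k < M) b i k * F i k t =
  lx / N%:R * AA t (xs t) b + lv / N%:R * AA t (vs t) b
  - lw * \sum_(i < N) \sum_(k < M) x i k t * b i k.
Proof.
rewrite /AA /F.
rewrite (eq_bigr (fun i => lx / N%:R * \sum_(j < N) phi gamma x i j t * \sum_(k < M) (x j k t - x i k t) * b i k
   + lv / N%:R * \sum_(j < N) phi gamma x i j t * \sum_(k < M) (v j k t - v i k t) * b i k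
   - lw * \sum_(k < M) x i k t * b i k)).
  rewrite sumrB big_split /= -!mulr_sumr //.
move=> i _.
rewrite (eq_bigr (fun k => b i k * (lx / N%:R * \sum_(j < N) phi gamma x i j t * (x j k t - x i k t))
  + b i k * (lv / N%:R * \sum_(j < N) phi gamma x i j t * (v j k t - v i k t))
  - lw * (x i k t * b i k))); last by move=> k _; ring.
rewrite sumrB big_split /= !sw -mulr_sumr //.
Qed.

Definition Sterm t := lx * N%:R^-1 *
  \sum_(i < N) \sum_(j < N) Kf gamma (sqdist x i j t).

Lemma E_eq t : E2 gamma lx lw x v t = lw * sqsum x t + sqsum v t + Sterm t.
Proof.
rewrite /E2 /Sterm /S_gamma /Kf /beta_gamma; congr (_ + _).
rewrite dsum_const.
case: (ltP gamma 2) => g2 /=; first by ring.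
by case: (eqVneq gamma 2) => e2 /=; ring.
Qed.

Lemma d_sqdist (t : R) (t0 : 0 < t) (i j : 'I_N) : is_derive t 1 (fun s => sqdist x i j s)
  (\sum_(k < M) 2 * (x i k t - x j k t) * (v i k t - v j k t)).
Proof.
rewrite /sqdist.
apply: (dsum (fun k s => (x i k s - x j k s) ^+ 2)) => k.
exact: (dX2 (dB (hx t t0 i k) (hx t t0 j k))).
Qed.

Lemma d_S (t : R) (t0 : 0 < t) : is_derive t 1 Sterm
  (lx * N%:R^-1 * \sum_(i < N) \sum_(j < N) (2^-1 * phi gamma x i j t) *
      \sum_(k < M) 2 * (x i k t - x j k t) * (v i k t - v j k t)).
Proof.
apply: dZ.
apply: (dsum (fun i s => \sum_(j < N) Kf gamma (sqdist x i j s))) => i.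
apply: (dsum (fun j s => Kf gamma (sqdist x i j s))) => j.
exact: (dcomp (dK gamma _ (sqdist_ge0 i j t)) (d_sqdist t t0 i j)).
Qed.

Lemma d_sq (f : 'I_N -> 'I_M -> R -> R) (df : 'I_N -> 'I_M -> R) (t : R) :
  (forall i k, is_derive t 1 (f i k) (df i k)) ->
  is_derive t 1 (sqsum f) (\sum_(i < N) \sum_(k < M) 2 * f i k t * df i k).
Proof.
move=> h.
apply: (dsum (fun i s => \sum_(k < M) f i k s ^+ 2)) => i.
exact: (dsum (fun k s => f i k s ^+ 2) _ (fun k => dX2 (h i k))).
Qed.

Lemma d_P (t : R) (t0 : 0 < t) : is_derive t 1 PP
  (\sum_(i < N) \sum_(k < M) (x i k t * F i k t + v i k t * v i k t)).
Proof.
apply: (dsum (fun i s => \sum_(k < M) x i k s * v i k s)) => i.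
exact: (dsum (fun k s => x i k s * v i k s) _ (fun k => dM (hx t t0 i k) (hv t t0 i k))).
Qed.

Lemma dsumlin n m (f g : 'I_n -> 'I_m -> R) (c : R) :
  (forall i k, f i k = c * g i k) ->
  \sum_(i < n) \sum_(k < m) f i k = c * \sum_(i < n) \sum_(k < m) g i k.
Proof. by move=> h; rewrite -dsum_const; apply: eq_bigr => i _; apply: eq_bigr. Qed.

Lemma TT_scale t a b (c : R) : TT t a (fun i k => c * b i k) = c * TT t a b.
Proof.
rewrite /TT -dsum_const; apply: eq_bigr => i _; apply: eq_bigr => j _.
rewrite (@sumlin _ _ _ (fun k => (a i k - a j k) * (b i k - b j k)) c); first by ring.
by move=> k; ring.
Qed.

Lemma dE (t : R) (t0 : 0 < t) :
  is_derive t 1 (E2 gamma lx lw x v) (- (lv / N%:R) * TT t (vs t) (vs t)).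
Proof.
have h := dD (dD (dZ lw (@d_sq x _ t (fun i k => hx t t0 i k))) (@d_sq v _ t (fun i k => hv t t0 i k)))
             (d_S t t0).
rewrite (_ : E2 gamma lx lw x v = fun s => lw * sqsum x s + sqsum v s + Sterm s); last first.
  by apply/funext => s; exact: E_eq.
apply: (is_derive_eq h).
rewrite (sumF t (fun i k => 2 * v i k t)).
rewrite (@dsumlin _ _ (fun i k => 2 * x i k t * v i k t) (fun i k => x i k t * v i k t) 2); last first.
  by move=> i k; ring.
rewrite (@dsumlin _ _ (fun i k => x i k t * (2 * v i k t)) (fun i k => x i k t * v i k t) 2); last first.
  by move=> i k; ring.
rewrite !AA_TT !TT_scale.
have -> : \sum_(i < N) \sum_(j < N) 2^-1 * phi gamma x i j t *
      \sum_(k < M) 2 * (x i k t - x j k t) * (v i k t - v j k t) = TT t (xs t) (vs t).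
  rewrite /TT; apply: eq_bigr => i _; apply: eq_bigr => j _.
  rewrite (@sumlin _ _ _ (fun k => (x i k t - x j k t) * (v i k t - v j k t)) 2); last first.
    by move=> k; ring.
  by rewrite /xs /vs; field.
rewrite /vs; field; by rewrite pnatr_eq0 -lt0n.
Qed.

Lemma dP_eq (t : R) (t0 : 0 < t) : is_derive t 1 PP
  (lx / N%:R * (- 2^-1 * TT t (xs t) (xs t)) + lv / N%:R * AA t (vs t) (xs t)
   - lw * sqsum x t + sqsum v t).
Proof.
apply: (is_derive_eq (d_P t t0)).
rewrite (eq_bigr (fun i => \sum_(k < M) x i k t * F i k t + \sum_(k < M) v i k t * v i k t)); last first.
  by move=> i _; rewrite big_split.
rewrite big_split /= (sumF t (xs t)) AA_TT /sqsum.
congr (_ + _ - _ * _ + _); apply: eq_bigr => i _; apply: eq_bigr => k _; by rewrite expr2.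
Qed.

Lemma sumFk (t : R) k : \sum_(i < N) F i k t = - lw * \sum_(i < N) x i k t.
Proof.
rewrite /F sumrB big_split /= -!mulr_sumr.
rewrite (symsum0 (fun i j => phi gamma x i j t) (fun i => x i k t)); last exact: ph_sym.
rewrite (symsum0 (fun i j => phi gamma x i j t) (fun i => v i k t)); last exact: ph_sym.
ring.
Qed.

Context (hxc : forall i k, {within [set t : R | 0 <= t], continuous (x i k : R -> R)})
  (hvc : forall i k, {within [set t : R | 0 <= t], continuous (v i k : R -> R)})
  (hx0 : forall k, \sum_(i < N) x i k 0 = 0)
  (hv0 : forall k, \sum_(i < N) v i k 0 = 0).

Lemma cont_Q (T : topologicalType) (c : R) (f g : T -> R) s :
  {for s, continuous f} -> {for s, continuous g} ->
  {for s, continuous (fun y => c * f y ^+ 2 + g y ^+ 2)}.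
Proof.
move=> hf hg2.
have -> : (fun y => c * f y ^+ 2 + g y ^+ 2) = ((cst c) \* (f \* f)) + (g \* g).
  by apply/funext => y; rewrite /= !expr2.
apply: continuousD; apply: continuousM => //.
- exact: cst_continuous.
- exact: continuousM.
Qed.

Lemma zero_sum (t : R) (t0 : 0 <= t) k :
  \sum_(i < N) x i k t = 0 /\ \sum_(i < N) v i k t = 0.
Proof.
set Q := fun s => lw * (\sum_(i < N) x i k s) ^+ 2 + (\sum_(i < N) v i k s) ^+ 2.
have Q0 : Q 0 = 0 by rewrite /Q hx0 hv0; ring.
have Qt : Q t <= 0.
  rewrite -Q0; apply: (@nonincr _ Q (fun=> 0)) => //.
  - move=> s s0 _.
    have h := dD (dZ lw (dX2 (dsum (fun i => x i k) (fun i => v i k s) (fun i => hx s s0 i k))))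
                 (dX2 (dsum (fun i => v i k) (fun i => F i k s) (fun i => hv s s0 i k))).
    apply: (is_derive_eq h); rewrite sumFk; ring.
  - apply: (continuous_subspaceW (B := [set t : R | 0 <= t])).
      by move=> y; rewrite /= in_itv /= => /andP[].
    move=> y; apply: cont_Q; apply: cont_sum => i; [exact: hxc | exact: hvc].
have h1 : 0 <= (\sum_(i < N) x i k t) ^+ 2 := sqr_ge0 _.
have h2 : 0 <= (\sum_(i < N) v i k t) ^+ 2 := sqr_ge0 _.
have e1 : (\sum_(i < N) x i k t) ^+ 2 = 0.
  apply/eqP; rewrite eq_le h1 andbT.
  have : lw * (\sum_(i < N) x i k t) ^+ 2 <= 0 by move: Qt; rewrite /Q; lra.
  by rewrite pmulr_rle0.
have e2 : (\sum_(i < N) v i k t) ^+ 2 = 0 by move: Qt; rewrite /Q e1; lra.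
by split; apply/eqP; rewrite -sqrf_eq0; apply/eqP.
Qed.

Lemma Nr_gt0 : 0 < N%:R :> R.
Proof. by rewrite ltr0n. Qed.

Lemma sqsum_ge0 (f : 'I_N -> 'I_M -> R -> R) t : 0 <= sqsum f t.
Proof. by apply: sumr_ge0 => i _; apply: sumr_ge0 => k _; rewrite sqr_ge0. Qed.

Lemma TT_ge0 t a : 0 <= TT t a a.
Proof.
apply: sumr_ge0 => i _; apply: sumr_ge0 => j _; apply: mulr_ge0; first exact: ph_ge0.
by apply: sumr_ge0 => k _; rewrite -expr2 sqr_ge0.
Qed.

Lemma TT_lb t (pm : R) : (forall i j, pm <= phi gamma x i j t) ->
  (forall k, \sum_(i < N) v i k t = 0) ->
  pm * (2 * N%:R * sqsum v t) <= TT t (vs t) (vs t).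
Proof.
move=> hpm hz.
rewrite /sqsum -(@sqdiff_sum _ _ _ (vs t)) // -dsum_const.
apply: ler_sum => i _; apply: ler_sum => j _.
rewrite /vs; apply: ler_wpM2r; last exact: hpm.
by apply: sumr_ge0 => k _; rewrite sqr_ge0.
Qed.

Lemma young (p d y dl : R) : 0 <= p -> p <= 1 -> 0 < dl ->
  p * (d * y) <= dl / 2 * (p * (d * d)) + (2 * dl)^-1 * y ^+ 2.
Proof.
move=> p0 p1 dl0.
have k : 0 <= dl / 2 * (d * d) + (2 * dl)^-1 * y ^+ 2 - d * y.
  have -> : dl / 2 * (d * d) + (2 * dl)^-1 * y ^+ 2 - d * y = (dl * d - y) ^+ 2 / (2 * dl).
    by field; rewrite gt_eqF.
  by rewrite divr_ge0 ?sqr_ge0 // ltW // mulr_gt0.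
have k2 : 0 <= p * (dl / 2 * (d * d) + (2 * dl)^-1 * y ^+ 2 - d * y) := mulr_ge0 p0 k.
have k3 : 0 <= (1 - p) * ((2 * dl)^-1 * y ^+ 2).
  by rewrite mulr_ge0 ?subr_ge0 // mulr_ge0 ?sqr_ge0 // invr_ge0 ltW // mulr_gt0.
move: k2 k3; set q := (2 * dl)^-1 * y ^+ 2 => k2 k3.
nra.
Qed.

Lemma AA_young t (dl : R) : 0 < dl ->
  AA t (vs t) (xs t) <= dl / 2 * TT t (vs t) (vs t) + N%:R * sqsum x t / (2 * dl).
Proof.
move=> dl0.
have eR : \sum_(i < N) \sum_(j < N) \sum_(k < M)
     (dl / 2 * (phi gamma x i j t * ((v i k t - v j k t) * (v i k t - v j k t)))
      + (2 * dl)^-1 * x i k t ^+ 2)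
   = dl / 2 * TT t (vs t) (vs t) + N%:R * sqsum x t / (2 * dl).
  under eq_bigr => i _ do under eq_bigr => j _ do rewrite big_split.
  under eq_bigr => i _ do rewrite big_split.
  rewrite big_split /=; congr (_ + _).
    rewrite /TT -dsum_const; apply: eq_bigr => i _; apply: eq_bigr => j _.
    by rewrite -!mulr_sumr.
  rewrite /sqsum (eq_bigr (fun i => N%:R * ((2 * dl)^-1 * \sum_(k < M) x i k t ^+ 2))).
    by rewrite -mulr_sumr -mulr_sumr; field; rewrite gt_eqF.
  move=> i _; rewrite sumr_const card_ord -mulr_sumr; exact: (esym (mulr_natl _ _)).
rewrite -eR /AA.
apply: ler_sum => i _; apply: ler_sum => j _.
rewrite mulr_sumr; apply: ler_sum => k _.
have := @young (phi gamma x i j t) (v j k t - v i k t) (x i k t) dl (ph_ge0 i j t) (ph_le1 i j t) dl0.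
rewrite /vs /xs.
have -> : (v j k t - v i k t) * (v j k t - v i k t) = (v i k t - v j k t) * (v i k t - v j k t) by ring.
by [].
Qed.

Lemma sqdist_le t i j : sqdist x i j t <= 4 * sqsum x t.
Proof.
have h1 : sqdist x i j t <= 2 * \sum_(k < M) x i k t ^+ 2 + 2 * \sum_(k < M) x j k t ^+ 2.
  rewrite !mulr_sumr -big_split; apply: ler_sum => k _.
  rewrite /=; have := sqr_ge0 (x i k t + x j k t); nra.
have hi := @term_le_sum _ N (fun i => \sum_(k < M) x i k t ^+ 2) i
   (fun j => sumr_ge0 _ (fun k _ => sqr_ge0 (x j k t))).
have hj := @term_le_sum _ N (fun i => \sum_(k < M) x i k t ^+ 2) j
   (fun j => sumr_ge0 _ (fun k _ => sqr_ge0 (x j k t))).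
rewrite /sqsum; simpl in hi, hj; lra.
Qed.

Lemma Sterm_bounds t : 0 <= Sterm t <= 2 * lx * N%:R * sqsum x t.
Proof.
have hN0 := Nr_gt0.
have hK : forall i j, 0 <= Kf gamma (sqdist x i j t) <= 2 * sqsum x t.
  move=> i j; have /andP[k1 k2] := @Kf_bounds _ gamma hg _ (sqdist_ge0 i j t).
  have := sqdist_le t i j; rewrite k1 /=; lra.
apply/andP; split.
  rewrite /Sterm; apply: mulr_ge0; first by apply: mulr_ge0; rewrite ?invr_ge0 ltW.
  by apply: sumr_ge0 => i _; apply: sumr_ge0 => j _; have /andP[] := hK i j.
have : \sum_(i < N) \sum_(j < N) Kf gamma (sqdist x i j t) <= N%:R * (N%:R * (2 * sqsum x t)).
  have hs : forall c : R, \sum_(i < N) c = N%:R * c.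
    by move=> c; rewrite sumr_const card_ord mulr_natl.
  rewrite -!hs; apply: ler_sum => i _; apply: ler_sum => j _.
  by have /andP[] := hK i j.
rewrite /Sterm => h.
have -> : 2 * lx * N%:R * sqsum x t = lx * N%:R^-1 * (N%:R * (N%:R * (2 * sqsum x t))).
  by field; rewrite gt_eqF.
by rewrite ler_wpM2l // mulr_ge0 ?invr_ge0 ?ltW.
Qed.

Lemma PP_bound t : - (2^-1 * (sqsum x t + sqsum v t)) <= PP t <= 2^-1 * (sqsum x t + sqsum v t).
Proof.
have e : 2^-1 * (sqsum x t + sqsum v t) =
   \sum_(i < N) \sum_(k < M) (2^-1 * (x i k t ^+ 2 + v i k t ^+ 2)).
  rewrite dsum_const /sqsum; congr (_ * _).
  rewrite -big_split; apply: eq_bigr => i _; by rewrite -big_split.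
rewrite e -sumrN; apply/andP; split; apply: ler_sum => i _;
  rewrite ?(sumrN) -?sumrN; apply: ler_sum => k _.
  have := sqr_ge0 (x i k t + v i k t); nra.
have := sqr_ge0 (x i k t - v i k t); nra.
Qed.

Definition E t := E2 gamma lx lw x v t.

Lemma E_lb t : lw * sqsum x t + sqsum v t <= E t.
Proof.
rewrite /E E_eq; have /andP[s0 _] := Sterm_bounds t; lra.
Qed.

Lemma E_ub t : E t <= (lw + 2 * lx * N%:R) * sqsum x t + sqsum v t.
Proof.
rewrite /E E_eq; have /andP[_ s1] := Sterm_bounds t; lra.
Qed.

Lemma X_le t : sqsum x t <= E t / lw.
Proof.
rewrite ler_pdivlMr //; have := E_lb t; have := sqsum_ge0 v t; lra.
Qed.

Lemma cont_from (f df : R -> R) (a b : R) : 0 < a ->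
  (forall s : R, 0 < s -> is_derive s 1 f (df s)) -> {within `[a, b], continuous f}.
Proof.
move=> a0 hd; apply: derivable_within_continuous => s.
rewrite in_itv /= => /andP[s0 _].
have s0' : 0 < s by apply: lt_le_trans s0.
by case: (hd s s0').
Qed.

Lemma E_mono t : 1 <= t -> E t <= E 1.
Proof.
move=> t1.
apply: (@nonincr _ E (fun s => - (lv / N%:R) * TT s (vs s) (vs s))) => //.
- move=> s s1 _; apply: dE => //; lra.
- move=> s _ _; rewrite mulNr oppr_le0; apply: mulr_ge0; last exact: TT_ge0.
  by rewrite divr_ge0 ?ltW ?Nr_gt0.
- apply: (@cont_from E (fun s => - (lv / N%:R) * TT s (vs s) (vs s))) => //.
  by move=> s s0; exact: dE.
Qed.

Definition Bc := 4 * (E 1 / lw).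
Definition pm := (1 + Bc) `^ (- (gamma / 2)).

Lemma E_ge0 t : 0 <= E t.
Proof.
have := E_lb t; have := mulr_ge0 (ltW hlw) (sqsum_ge0 x t); have := sqsum_ge0 v t; lra.
Qed.

Lemma pm_gt0 : 0 < pm.
Proof.
apply: powR_gt0; rewrite /Bc; have := E_ge0 1.
have : 0 <= E 1 / lw by rewrite divr_ge0 ?E_ge0 ?ltW.
lra.
Qed.

Lemma pm_le t i j : 1 <= t -> pm <= phi gamma x i j t.
Proof.
move=> t1; rewrite /pm /phi; apply: pw_ge => //; first exact: sqdist_ge0.
have h1 := sqdist_le t i j.
have h2 := X_le t.
have h3 : E t / lw <= E 1 / lw by rewrite ler_pM2r ?invr_gt0 ?E_mono.
rewrite /Bc; lra.
Qed.

Definition eps := Num.min (Num.min (lw / lv) (lv * pm / 2)) (Num.min lw 1).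

Lemma eps_props : [/\ 0 < eps, eps <= lw / lv, eps <= lv * pm / 2, eps <= lw & eps <= 1].
Proof.
have hp := pm_gt0.
have h1 : 0 < lw / lv by rewrite divr_gt0.
have h2 : 0 < lv * pm / 2 by rewrite divr_gt0 // mulr_gt0.
have := lexx eps; rewrite {2}/eps !le_min => /andP[/andP[e1 e2] /andP[e3 e4]].
split=> //.
by rewrite /eps !lt_min h1 h2 hlw ltr01.
Qed.

Definition PPd t := lx / N%:R * (- 2^-1 * TT t (xs t) (xs t)) + lv / N%:R * AA t (vs t) (xs t)
   - lw * sqsum x t + sqsum v t.
Definition L t := E t + eps * PP t.
Definition Ld t := - (lv / N%:R) * TT t (vs t) (vs t) + eps * PPd t.

Lemma dL (t : R) (t0 : 0 < t) : is_derive t 1 L (Ld t).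
Proof. exact: (dD (dE t t0) (dZ eps (dP_eq t t0))). Qed.

Lemma Ld_le (t : R) (t1 : 1 < t) : Ld t <= - (eps / 2) * (lw * sqsum x t + sqsum v t).
Proof.
have t0 : 0 < t by lra.
have [e0 e1 e2 e3 e4] := eps_props.
have hN0 := Nr_gt0.
set X := sqsum x t; set V := sqsum v t.
set a := TT t (vs t) (vs t).
have hX := sqsum_ge0 x t; have hV := sqsum_ge0 v t.
have ha := @TT_lb t pm (fun i j => pm_le t i j (ltW t1)) (fun k => (zero_sum t (ltW t0) k).2).
have hpm := pm_gt0.
have hA := @AA_young t (lv / lw) (divr_gt0 hlv hlw).
have hTx := TT_ge0 t (xs t).
rewrite /Ld /PPd -/X -/V -/a.
set A := AA t (vs t) (xs t).
set Tx := TT t (xs t) (xs t).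
have q1 : eps * (lx / N%:R * (- 2^-1 * Tx)) <= 0.
  rewrite pmulr_rle0 // pmulr_rle0 ?divr_gt0 //.
  by rewrite mulNr oppr_le0 mulr_ge0 // invr_ge0.
have q2 : eps * (lv / N%:R * A) <= eps * (lv / N%:R * (lv / lw / 2 * a + N%:R * X / (2 * (lv / lw)))).
  apply: ler_wpM2l; first exact: ltW.
  by apply: ler_wpM2l; first by rewrite divr_ge0 ?ltW.
have e5 : eps * (lv / N%:R * (lv / lw / 2 * a + N%:R * X / (2 * (lv / lw)))) =
   (eps * (lv / lw)) * (lv / (2 * N%:R) * a) + eps * lw / 2 * X.
  by field; rewrite !gt_eqF.
have a0 : 0 <= a := TT_ge0 t (vs t).
have q3a : eps * (lv / lw) <= 1.
  have h : lw / lv * (lv / lw) = 1 by field; rewrite !gt_eqF.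
  by rewrite -h; apply: ler_wpM2r => //; rewrite divr_ge0 ?ltW.
have q3 : (eps * (lv / lw)) * (lv / (2 * N%:R) * a) <= lv / (2 * N%:R) * a.
  apply: ler_piMl => //.
  by apply: mulr_ge0 => //; rewrite divr_ge0 ?ltW ?mulr_gt0.
have q4 : lv / (2 * N%:R) * (pm * (2 * N%:R * V)) = lv * pm * V.
  by field; rewrite gt_eqF.
have q5 : lv / (2 * N%:R) * (pm * (2 * N%:R * V)) <= lv / (2 * N%:R) * a.
  by apply: ler_wpM2l => //; rewrite divr_ge0 ?ltW ?mulr_gt0.
have q6 : lv / N%:R * a = 2 * (lv / (2 * N%:R) * a) by field; rewrite gt_eqF.
have q7 : 3 / 2 * eps * V <= lv * pm * V.
  by apply: ler_wpM2r => //; lra.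
set u := lv / (2 * N%:R) * a.
move: q2; rewrite e5 => q2.
set T1 := eps * (lx / N%:R * (- 2^-1 * Tx)) in q1 *.
set T2 := eps * (lv / N%:R * A) in q2 *.
have eG : - (lv / N%:R) * a + eps * (lx / N%:R * (- 2^-1 * Tx) + lv / N%:R * A - lw * X + V)
   = - (lv / N%:R * a) + T1 + T2 - (eps * lw * X) + eps * V by rewrite /T1 /T2; ring.
have eR : - (eps / 2) * (lw * X + V) = - ((eps * lw * X) / 2) - (eps * V) / 2 by ring.
have e6 : eps * lw / 2 * X = (eps * lw * X) / 2 by ring.
have e7 : 3 / 2 * eps * V = 3 / 2 * (eps * V) by ring.
rewrite eG eR q6; rewrite e6 in q2; rewrite e7 in q7.
move: q1 q2 q3 q5 q7; rewrite q4.
set W := eps * lw * X; set Z := eps * V; set Q := (eps * (lv / lw)) * u; set P := lv * pm * V.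
lra.
Qed.

Definition Cc := 2 + (2 * lx * N%:R + 1) / lw.
Definition kk := eps / (2 * Cc).

Lemma Cc_gt0 : 1 <= Cc.
Proof.
have : 0 <= (2 * lx * N%:R + 1) / lw.
  apply: divr_ge0; last exact: ltW.
  have : 0 <= 2 * lx * N%:R by rewrite !mulr_ge0 ?ltW ?Nr_gt0.
  lra.
rewrite /Cc; lra.
Qed.

Lemma L_lb t : 2^-1 * (lw * sqsum x t + sqsum v t) <= L t.
Proof.
have [e0 e1 e2 e3 e4] := eps_props.
have hE := E_lb t.
have /andP[p1 _] := PP_bound t.
have hX := sqsum_ge0 x t; have hV := sqsum_ge0 v t.
have h1 : eps * (- (2^-1 * (sqsum x t + sqsum v t))) <= eps * PP t.
  by apply: ler_wpM2l => //; exact: ltW.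
have h2 : eps * sqsum x t <= lw * sqsum x t by apply: ler_wpM2r.
have h3 : eps * sqsum v t <= sqsum v t by rewrite ler_piMl.
have e5 : eps * (- (2^-1 * (sqsum x t + sqsum v t))) =
   - 2^-1 * (eps * sqsum x t) - 2^-1 * (eps * sqsum v t) by ring.
rewrite e5 in h1.
rewrite /L; set A := eps * sqsum x t in h1 h2 *; set B := eps * sqsum v t in h1 h3 *.
set P := eps * PP t in h1 *.
set Y := lw * sqsum x t in hE h2 *.
lra.
Qed.

Lemma L_ub t : L t <= Cc * (lw * sqsum x t + sqsum v t).
Proof.
have [e0 e1 e2 e3 e4] := eps_props.
have hE := E_ub t.
have /andP[_ p2] := PP_bound t.
have hX := sqsum_ge0 x t; have hV := sqsum_ge0 v t.
have h1 : eps * PP t <= eps * (2^-1 * (sqsum x t + sqsum v t)).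
  by apply: ler_wpM2l => //; exact: ltW.
have h2 : eps * (2^-1 * (sqsum x t + sqsum v t)) <= 2^-1 * (sqsum x t + sqsum v t).
  by rewrite ler_piMl // mulr_ge0 // addr_ge0.
have e5 : Cc * (lw * sqsum x t + sqsum v t) =
   2 * lw * sqsum x t + 2 * sqsum v t + (2 * lx * N%:R + 1) * sqsum x t
   + (2 * lx * N%:R + 1) / lw * sqsum v t.
  by rewrite /Cc; field; rewrite gt_eqF.
have hc : 0 <= (2 * lx * N%:R + 1) / lw * sqsum v t.
  apply: mulr_ge0 => //; apply: divr_ge0; last exact: ltW.
  have : 0 <= 2 * lx * N%:R by rewrite !mulr_ge0 ?ltW ?Nr_gt0.
  lra.
rewrite e5 /L.
move: hc; set Q := (2 * lx * N%:R + 1) / lw * sqsum v t => hc.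
have e6 : (lw + 2 * lx * N%:R) * sqsum x t = lw * sqsum x t + (2 * lx * N%:R) * sqsum x t by ring.
have e7 : (2 * lx * N%:R + 1) * sqsum x t = (2 * lx * N%:R) * sqsum x t + sqsum x t by ring.
rewrite e6 in hE; rewrite e7.
have e8 : 2 * lw * sqsum x t = 2 * (lw * sqsum x t) by ring.
rewrite e8.
have : 0 <= lw * sqsum x t by apply: mulr_ge0 => //; exact: ltW.
set Y := lw * sqsum x t in hE *; set Z := 2 * lx * N%:R * sqsum x t in hE *.
set P := eps * PP t in h1 *.
lra.
Qed.

Lemma E_le_L t : E t <= 2 * Cc * L t.
Proof.
have hE := E_ub t.
have hl := L_lb t.
have hC := Cc_gt0.
have hX := sqsum_ge0 x t; have hV := sqsum_ge0 v t.
have h1 : (lw + 2 * lx * N%:R) * sqsum x t + sqsum v t <= Cc * (lw * sqsum x t + sqsum v t).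
  have e5 : Cc * (lw * sqsum x t + sqsum v t) =
     2 * (lw * sqsum x t) + 2 * sqsum v t + (2 * lx * N%:R) * sqsum x t + sqsum x t
     + (2 * lx * N%:R + 1) / lw * sqsum v t.
    by rewrite /Cc; field; rewrite gt_eqF.
  have hc : 0 <= (2 * lx * N%:R + 1) / lw * sqsum v t.
    apply: mulr_ge0 => //; apply: divr_ge0; last exact: ltW.
    have : 0 <= 2 * lx * N%:R by rewrite !mulr_ge0 ?ltW ?Nr_gt0.
    lra.
  have e6 : (lw + 2 * lx * N%:R) * sqsum x t = lw * sqsum x t + (2 * lx * N%:R) * sqsum x t by ring.
  rewrite e5 e6.
  move: hc; set Q := (2 * lx * N%:R + 1) / lw * sqsum v t => hc.
  have : 0 <= lw * sqsum x t by apply: mulr_ge0 => //; exact: ltW.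
  lra.
have h2 : Cc * (lw * sqsum x t + sqsum v t) <= Cc * (2 * L t).
  apply: ler_wpM2l; first lra.
  lra.
have e : Cc * (2 * L t) = 2 * Cc * L t by ring.
lra.
Qed.

Lemma kk_gt0 : 0 < kk.
Proof.
have [e0 _ _ _ _] := eps_props; have hC := Cc_gt0.
by rewrite /kk divr_gt0 // mulr_gt0 //; lra.
Qed.

Definition G t := L t * expR (kk * t).

Lemma dG (t : R) (t0 : 0 < t) :
  is_derive t 1 G (L t * (expR (kk * t) * (kk * 1)) + expR (kk * t) * Ld t).
Proof.
exact: (dM (dL t t0) (@dcomp _ expR (fun s => kk * s) _ _ t (is_derive_expR (kk * t))
   (dZ kk (is_derive_id t 1)))).
Qed.

Lemma G_mono t : 1 <= t -> G t <= G 1.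
Proof.
move=> t1.
apply: (@nonincr _ G (fun s => L s * (expR (kk * s) * (kk * 1)) + expR (kk * s) * Ld s)) => //.
- move=> s s1 _; apply: dG; lra.
- move=> s s1 _.
  have hk := kk_gt0; have hC := Cc_gt0.
  have hLd := Ld_le s s1.
  have hLu := L_ub s.
  have [e0 _ _ _ _] := eps_props.
  have h1 : kk * L s <= kk * (Cc * (lw * sqsum x s + sqsum v s)).
    by apply: ler_wpM2l => //; exact: ltW.
  have e1 : kk * (Cc * (lw * sqsum x s + sqsum v s)) = eps / 2 * (lw * sqsum x s + sqsum v s).
    by rewrite /kk; field; rewrite gt_eqF //; lra.
  have h2 : kk * L s + Ld s <= 0.
    move: h1 hLd; rewrite e1; set Y := lw * sqsum x s + sqsum v s.
    have e2 : - (eps / 2) * Y = - (eps / 2 * Y) by ring.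
    rewrite e2; lra.
  have e3 : L s * (expR (kk * s) * (kk * 1)) + expR (kk * s) * Ld s =
     expR (kk * s) * (kk * L s + Ld s) by ring.
  rewrite e3; apply: mulr_ge0_le0 => //; exact: ltW (expR_gt0 _).
- apply: (@cont_from G (fun s => L s * (expR (kk * s) * (kk * 1)) + expR (kk * s) * Ld s)) => //.
  by move=> s s0; exact: dG.
Qed.

Lemma E_decay t : 1 <= t -> E t <= 2 * Cc * G 1 / (1 + kk * t).
Proof.
move=> t1.
have hk := kk_gt0; have hC := Cc_gt0.
have hG := G_mono t t1.
have hL1 : 0 <= L 1.
  have := L_lb 1; have := sqsum_ge0 x 1; have := sqsum_ge0 v 1.
  have := mulr_ge0 (ltW hlw) (sqsum_ge0 x 1); lra.
have hLt : 0 <= L t.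
  have := L_lb t; have := sqsum_ge0 x t; have := sqsum_ge0 v t.
  have := mulr_ge0 (ltW hlw) (sqsum_ge0 x t); lra.
have hkt : 0 < 1 + kk * t by have := mulr_gt0 hk (lt_le_trans ltr01 t1); lra.
have hex := expR_ge1Dx (kk * t).
have h1 : L t * (1 + kk * t) <= G 1.
  apply: le_trans hG; rewrite /G; apply: ler_wpM2l => //.
have h2 : L t <= G 1 / (1 + kk * t) by rewrite ler_pdivlMr.
have h3 := E_le_L t.
have h4 : 2 * Cc * L t <= 2 * Cc * (G 1 / (1 + kk * t)).
  by apply: ler_wpM2l => //; lra.
by rewrite -mulrA; lra.
Qed.

Lemma main_cvg : E t @[t --> +oo] --> 0.
Proof.
apply/cvgrPdist_le => e e0.
have hk := kk_gt0; have hC := Cc_gt0.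
have hG1 : 0 <= G 1.
  rewrite /G; apply: mulr_ge0; last exact: ltW (expR_gt0 _).
  have := L_lb 1; have := sqsum_ge0 x 1; have := sqsum_ge0 v 1.
  have := mulr_ge0 (ltW hlw) (sqsum_ge0 x 1); lra.
set K := 2 * Cc * G 1.
have hK : 0 <= K by rewrite /K; apply: mulr_ge0 => //; apply: mulr_ge0; lra.
exists (1 + K / (e * kk)); split; first exact: num_real.
move=> t tM.
have hKe : 0 <= K / (e * kk) by rewrite divr_ge0 // mulr_ge0 // ltW.
have t1 : 1 <= t by lra.
rewrite sub0r normrN ger0_norm; last exact: E_ge0.
apply: (le_trans (E_decay t t1)).
have hkt : 0 < 1 + kk * t by have := mulr_gt0 hk (lt_le_trans ltr01 t1); lra.
rewrite -/K ler_pdivrMr //.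
have h1 : kk * (K / (e * kk)) <= kk * t by apply: ler_wpM2l; [exact: ltW | lra].
have e1 : kk * (K / (e * kk)) = K / e by field; rewrite !gt_eqF.
rewrite e1 in h1.
have h2 : e * (K / e) <= e * (kk * t) by apply: ler_wpM2l; [exact: ltW | lra].
have e2 : e * (K / e) = K by field; rewrite gt_eqF.
rewrite e2 in h2.
have : 0 <= e by exact: ltW.
nra.
Qed.

End Main.

Unset Implicit Arguments.

Theorem theorem3p6 (R : realType) (M N : nat) (hM : (0 < M)%N) (hN : (0 < N)%N)
  (gamma lx lv lw : R) (hgamma : 0 < gamma) (hlx : 0 < lx) (hlv : 0 < lv)
  (hlw : 0 < lw)
  (x v : 'I_N -> 'I_M -> R -> R)
  (hxc : forall i k, {within [set t : R | 0 <= t], continuous (x i k : R -> R)})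
  (hvc : forall i k, {within [set t : R | 0 <= t], continuous (v i k : R -> R)})
  (hx : forall t : R, 0 < t -> forall i k, is_derive t 1 (x i k) (v i k t))
  (hv : forall t : R, 0 < t -> forall i k,
     is_derive t 1 (v i k)
       (lx / N%:R * \sum_(j < N) phi gamma x i j t * (x j k t - x i k t)
        + lv / N%:R * \sum_(j < N) phi gamma x i j t * (v j k t - v i k t)
        - lw * x i k t))
  (hx0 : forall k, \sum_(i < N) x i k 0 = 0)
  (hv0 : forall k, \sum_(i < N) v i k 0 = 0) :
  E2 gamma lx lw x v t @[t --> +oo] --> 0.
Proof.
exact: (@main_cvg R M N hN gamma lx lv lw hgamma hlx hlv hlw x v hx hv hxc hvc hx0 hv0).
Qed.
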